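(* Let $G$, $K$, the faces $F_1,\dots,F_c$, the domain $\mathcal{D}_G$, the functions $\mathcal{A}_k$ and the sets $\mathcal{Q}(\vec q)$ be as in the context, and fix $\vec q=(q_1,\dots,q_c)\in\mathbb{Z}^c$. For every $\vec\varepsilon\in\mathcal{Q}(\vec q)$ there is a configuration $\theta\in\mathbb{R}^n$, unique up to the equivalence described in the context, such that for every edge $e$ and every bounded face $F_k$ whose counterclockwise boundary traversal passes through $e$ from vertex $a$ to vertex $b$, one has $\Delta_{ab}=\delta_k(e;\vec\varepsilon)$. This configuration is a stable fixed point with all angle differences in $[-\pi/2,\pi/2]$ and with winding vector $\vec q$. The resulting map from $\mathcal{Q}(\vec q)$ to the set of (equivalence classes of) stable fixed points with all angle differences in $[-\pi/2,\pi/2]$ and winding vector $\vec q$ is a bijection.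
   Context: Let $G$ be a finite connected planar graph with vertices $1,\dots,n$ and $m$ edges, such that every edge of $G$ lies on at least one cycle of $G$, and fix a planar embedding of $G$. Let $F_1,\dots,F_c$ ($c=m-n+1$) be the bounded faces of the embedding; each edge borders exactly two faces (possibly one of them the unbounded one). For $k\neq \ell$ let $m_{k\ell}$ be the number of edges bordering both $F_k$ and $F_\ell$, let $m_k$ be the number of edges bordering $F_k$ and the unbounded face, and let $n_k=m_k+\sum_{\ell\neq k}m_{k\ell}$ be the number of edges on the boundary of $F_k$. Fix a coupling constant $K>0$ and consider the Kuramoto model $\dot\theta_i=-K\sum_{j\sim i}\sin(\theta_i-\theta_j)$, $i=1,\dots,n$ ($j\sim i$ means $j$ is adjacent to $i$). A fixed point is $\theta\in\mathbb{R}^n$ with $\sum_{j\sim i}\sin(\theta_i-\theta_j)=0$ for all $i$; two configurations are considered equal if they differ by adding one common constant to all $\theta_i$ and/or integer multiples of $2\pi$ to individual $\theta_i$. For adjacent $i,j$, $\Delta_{ij}$ denotes $\theta_i-\theta_j$ reduced modulo $2\pi$ into $(-\pi,\pi]$ (so $\Delta_{ji}=-\Delta_{ij}$ unless $\Delta_{ij}=\pi$). The stability matrix $M$ has entries $M_{ij}=K\cos(\theta_i-\theta_j)$ if $i\sim j$, $M_{ii}=-\sum_{k\sim i}K\cos(\theta_i-\theta_k)$, and $M_{ij}=0$ otherwise; a fixed point is stable if $M$ is negative semidefinite. The winding vector of a fixed point is $\vec q=(q_1,\dots,q_c)$, where $q_k=\frac{1}{2\pi}\sum \Delta_{ab}$,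 the sum running over the edges of the boundary of $F_k$ traversed counterclockwise, each edge traversed from $a$ to $b$; each $q_k$ is an integer. Define $\mathcal{D}_G=\{\vec\varepsilon\in\mathbb{R}^c: |\varepsilon_k|\le 1 \text{ whenever } m_k>0,\ |\varepsilon_k-\varepsilon_\ell|\le 1\text{ whenever } m_{k\ell}>0\}$. For $\vec\varepsilon\in\mathcal{D}_G$, an edge $e$ and a bounded face $F_k$ bordered by $e$, set $\delta_k(e;\vec\varepsilon)=\arcsin(\varepsilon_k)$ if the other face bordered by $e$ is the unbounded face and $\delta_k(e;\vec\varepsilon)=\arcsin(\varepsilon_k-\varepsilon_\ell)$ if it is $F_\ell$. Define $\mathcal{A}_k(\vec\varepsilon)=m_k\arcsin(\varepsilon_k)+\sum_{\ell\neq k}m_{k\ell}\arcsin(\varepsilon_k-\varepsilon_\ell)$ and, for $\vec q\in\mathbb{Z}^c$, $\mathcal{Q}(\vec q)=\{\vec\varepsilon\in\mathcal{D}_G:\mathcal{A}_k(\vec\varepsilon)=2\pi q_k\text{ for all }k=1,\dots,c\}$. *)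

(* Defs.v *)
From HB Require Import structures.
From mathcomp Require Import all_boot all_order all_algebra.
From mathcomp Require Import all_classical all_reals all_analysis.
Set Implicit Arguments. Unset Strict Implicit. Unset Printing Implicit Defensive.
Import Order.TTheory GRing.Theory Num.Theory.
Local Open Scope ring_scope.

(* Darts (oriented edges) are pairs (a,b) with adj a b.
   rot v u = the neighbour of v that follows u in CLOCKWISE order around v
   in the embedding.  The face permutation
       fperm (a,b) = (b, rot b a)
   then traces each face boundary with the face on its LEFT, i.e. bounded
   faces counterclockwise.
   lab labels the face orbits of fperm: None = unbounded face,
   Some k = bounded face F_k (k : 'I_c). *)

Section Graph.
Variable n : nat.
Implicit Types (adj : rel 'I_n).

Definition dart adj (d : 'I_n * 'I_n) : bool := adj d.1 d.2.

Definition medges adj : nat := #|[set d : 'I_n * 'I_n | dart adj d]| %/ 2.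

Definition fperm (rot : 'I_n -> 'I_n -> 'I_n) (d : 'I_n * 'I_n) : 'I_n * 'I_n :=
  (d.2, rot d.2 d.1).

Definition edge_on_cycle adj (u v : 'I_n) : Prop :=
  connect (fun x y => adj x y && ([set x; y] != [set u; v])) v u.

Definition plane_graph adj (rot : 'I_n -> 'I_n -> 'I_n) (c : nat)
    (lab : 'I_n * 'I_n -> option 'I_c) : Prop :=
  symmetric adj /\ irreflexive adj /\
  (forall u v, connect adj u v) /\
  (forall u v, adj u v -> edge_on_cycle adj u v) /\
  (forall v u, adj v u -> adj v (rot v u)) /\
  (forall v u w, adj v u -> adj v w -> fconnect (rot v) u w) /\
  (forall d d', dart adj d -> dart adj d' ->
      (lab d == lab d') = fconnect (fperm rot) d d') /\
  (forall o : option 'I_c, exists2 d, dart adj d & lab d = o) /\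
  (* Euler's formula  n - m + (c+1) = 2  (genus 0, i.e. planar) *)
  c + n = (medges adj).+1.

Definition rev (d : 'I_n * 'I_n) : 'I_n * 'I_n := (d.2, d.1).

End Graph.

Section Kuramoto.
Variable R : realType.
Variables (n c : nat) (adj : rel 'I_n) (lab : 'I_n * 'I_n -> option 'I_c).

Definition m_out (k : 'I_c) : nat :=
  #|[set d : 'I_n * 'I_n | dart adj d && (lab d == Some k) && (lab (rev d) == None)]|.
Definition m_between (k l : 'I_c) : nat :=
  #|[set d : 'I_n * 'I_n | dart adj d && (lab d == Some k) && (lab (rev d) == Some l)]|.
Definition n_bd (k : 'I_c) : nat :=
  #|[set d : 'I_n * 'I_n | dart adj d && (lab d == Some k)]|.

Definition in_DG (eps : 'I_c -> R) : Prop :=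
  (forall k, (0 < m_out k)%N -> `|eps k| <= 1) /\
  (forall k l, k != l -> (0 < m_between k l)%N -> `|eps k - eps l| <= 1).

Definition delta (eps : 'I_c -> R) (k : 'I_c) (d : 'I_n * 'I_n) : R :=
  match lab (rev d) with
  | None => asin (eps k)
  | Some l => asin (eps k - eps l)
  end.

Definition A_k (eps : 'I_c -> R) (k : 'I_c) : R :=
  (m_out k)%:R * asin (eps k)
  + \sum_(l < c | l != k) (m_between k l)%:R * asin (eps k - eps l).

Definition Qset (q : 'I_c -> int) (eps : 'I_c -> R) : Prop :=
  in_DG eps /\ forall k, A_k eps k = 2 * pi * (q k)%:~R.

(* reduction modulo 2 pi into (-pi, pi] *)
Definition wrap (x : R) : R :=
  x - 2 * pi * (Num.ceil ((x - pi) / (2 * pi)))%:~R.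

Definition Delta (theta : 'I_n -> R) (a b : 'I_n) : R := wrap (theta a - theta b).

Definition fixed_point (theta : 'I_n -> R) : Prop :=
  forall i, \sum_(j < n | adj i j) sin (theta i - theta j) = 0.

Definition stab_matrix (K : R) (theta : 'I_n -> R) : 'M[R]_n :=
  \matrix_(i, j)
    if i == j then - \sum_(k < n | adj i k) K * cos (theta i - theta k)
    else if adj i j then K * cos (theta i - theta j) else 0.

Definition neg_semidef (M : 'M[R]_n) : Prop :=
  forall x : 'cV[R]_n, (x^T *m M *m x) ord0 ord0 <= 0.

Definition stable_fp (K : R) (theta : 'I_n -> R) : Prop :=
  fixed_point theta /\ neg_semidef (stab_matrix K theta).

Definition small_angles (theta : 'I_n -> R) : Prop :=
  forall i j, adj i j -> `|Delta theta i j| <= pi / 2.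

Definition has_winding (theta : 'I_n -> R) (q : 'I_c -> int) : Prop :=
  forall k, \sum_(d : 'I_n * 'I_n | dart adj d && (lab d == Some k))
              Delta theta d.1 d.2 = 2 * pi * (q k)%:~R.

Definition config_equiv (theta theta' : 'I_n -> R) : Prop :=
  exists (C : R) (z : 'I_n -> int),
    forall i, theta' i = theta i + C + 2 * pi * (z i)%:~R.

Definition realizes (eps : 'I_c -> R) (theta : 'I_n -> R) : Prop :=
  forall (d : 'I_n * 'I_n) (k : 'I_c), dart adj d -> lab d = Some k ->
    Delta theta d.1 d.2 = delta eps k d.

End Kuramoto.

(* Main.v *)
Require Import Defs.
From HB Require Import structures.
From mathcomp Require Import all_boot all_order all_algebra.
From mathcomp Require Import all_classical all_reals all_analysis.
Import Order.TTheory GRing.Theory Num.Theory.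
Local Open Scope ring_scope.
From mathcomp Require Import zify.
From mathcomp Require Import ring lra.

Section Trig.
Variable R : realType.

Lemma intr_is_int (z : int) : (z%:~R : R) \is a Num.int.
Proof. exact: intr_int. Qed.

Lemma wrap_shift (x : R) (z : int) : Defs.wrap (x + 2 * pi * z%:~R) = Defs.wrap x.
Proof.
rewrite /Defs.wrap.
have hp : (2 * pi : R) != 0 by rewrite mulf_neq0 // ?pnatr_eq0 // gt_eqF // pi_gt0.
have -> : (x + 2 * pi * z%:~R - pi) / (2 * pi) = (x - pi) / (2 * pi) + z%:~R.
  by rewrite addrAC mulrDl [2 * pi * _]mulrC -mulrA divff // mulr1.
rewrite ceilDrz ?intr_is_int // intrKceil rmorphD /=; ring.
Qed.

Lemma wrap_id (x : R) : - pi < x <= pi -> Defs.wrap x = x.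
Proof.
move=> /andP [h1 h2]; rewrite /Defs.wrap.
have hp := pi_gt0 R.
have -> : Num.ceil ((x - pi) / (2 * pi)) = 0.
  apply: ceil_def; rewrite sub0r !rmorphN /= rmorph1 /= rmorph0.
  apply/andP; split.
    by rewrite ltr_pdivlMr ?mulr_gt0 //; lra.
  by rewrite ler_pdivrMr ?mulr_gt0 //; lra.
by rewrite mulr0 subr0.
Qed.

Lemma wrap_diff (a b : R) : Defs.wrap a = Defs.wrap b -> exists z : int, a - b = 2 * pi * z%:~R.
Proof.
rewrite /Defs.wrap => e.
exists (Num.ceil ((a - pi) / (2 * pi)) - Num.ceil ((b - pi) / (2 * pi))).
rewrite rmorphB /=; move: e; set u := (Num.ceil _)%:~R; set v := (Num.ceil _)%:~R.
move=> e; have : a = b - 2 * pi * v + 2 * pi * u by rewrite -e; ring.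
move=> ->; ring.
Qed.

Lemma sin_shift (x : R) (z : int) : sin (x + 2 * pi * z%:~R) = sin x.
Proof.
case: z => k.
  by rewrite -pmulrn mulr_natr mulr_natl (periodicn (@sinD2pi R)).
rewrite NegzE rmorphN /= -pmulrn mulrN.
set a := 2 * pi * _.
by rewrite -[in RHS](subrK a x) /a mulr_natr mulr_natl (periodicn (@sinD2pi R)).
Qed.

Lemma cos_shift (x : R) (z : int) : cos (x + 2 * pi * z%:~R) = cos x.
Proof.
case: z => k.
  by rewrite -pmulrn mulr_natr mulr_natl (periodicn (@cosD2pi R)).
rewrite NegzE rmorphN /= -pmulrn mulrN.
set a := 2 * pi * _.
by rewrite -[in RHS](subrK a x) /a mulr_natr mulr_natl (periodicn (@cosD2pi R)).
Qed.

Lemma wrap_eq (x : R) : exists z : int, Defs.wrap x = x + 2 * pi * z%:~R.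
Proof.
exists (- Num.ceil ((x - pi) / (2 * pi))); rewrite /Defs.wrap rmorphN /=; ring.
Qed.

Lemma sin_wrap (x : R) : sin (Defs.wrap x) = sin x.
Proof. by have [z ->] := wrap_eq x; rewrite sin_shift. Qed.
Lemma cos_wrap (x : R) : cos (Defs.wrap x) = cos x.
Proof. by have [z ->] := wrap_eq x; rewrite cos_shift. Qed.

Lemma asin_rng (x : R) : `|x| <= 1 -> -(pi / 2) <= asin x <= pi / 2.
Proof. by rewrite ler_norml => h; rewrite asin_geNpi2 ?asin_lepi2. Qed.

Lemma asin_K (x : R) : `|x| <= 1 -> sin (asin x) = x.
Proof. by rewrite ler_norml => h; rewrite asinK // in_itv /=. Qed.

Lemma sin_K (y : R) : -(pi / 2) <= y <= pi / 2 -> asin (sin y) = y.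
Proof. by move=> h; rewrite sinK // in_itv /=. Qed.

Lemma asin_0 : asin (0 : R) = 0.
Proof.
rewrite -[X in asin X](@sin0 R) sin_K //.
have := pi_gt0 R; move=> hp; apply/andP; split; lra.
Qed.

Lemma asinN (x : R) : `|x| <= 1 -> asin (- x) = - asin x.
Proof.
move=> h; rewrite -{1}(asin_K _ h) -sinN sin_K //.
have := asin_rng _ h => /andP [h1 h2]; apply/andP; split; lra.
Qed.

Lemma asin_inj (x y : R) : `|x| <= 1 -> `|y| <= 1 -> asin x = asin y -> x = y.
Proof. by move=> hx hy e; rewrite -(asin_K _ hx) -(asin_K _ hy) e. Qed.

Lemma pihalf_in (y : R) : -(pi / 2) <= y <= pi / 2 -> - pi < y <= pi.
Proof. have := pi_gt0 R => hp /andP [h1 h2]; apply/andP; split; lra. Qed.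

End Trig.

Lemma negsemi (R : realType) (n : nat) (adj : rel 'I_n) (K : R) (th : 'I_n -> R) :
  symmetric adj -> irreflexive adj -> 0 <= K ->
  (forall i j, adj i j -> 0 <= cos (th i - th j)) ->
  neg_semidef (stab_matrix adj K th).
Proof.
move=> hs hi hK hc x.
pose w i j : R := if adj i j then K * cos (th i - th j) else 0.
have w0 i j : 0 <= w i j by rewrite /w; case: ifP => // h; rewrite mulr_ge0 // hc.
have ws i j : w i j = w j i by rewrite /w hs; case: ifP => // _; rewrite -opprB cosN.
have eM i j : stab_matrix adj K th i j = w i j - (i == j)%:R * \sum_k w i k.
  rewrite /stab_matrix mxE; case: (eqVneq i j) => [<-|ij].
    rewrite mul1r /w hi sub0r; congr (- _).
    by rewrite big_mkcond; apply: eq_bigr => k _; rewrite /w.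
  by rewrite mul0r subr0.
pose y i := x i 0.
have eQ : (x^T *m stab_matrix adj K th *m x) 0 0 =
    \sum_i \sum_j w i j * (y i * y j - y i ^+ 2).
  rewrite mxE; under eq_bigr do rewrite mxE big_distrl /=.
  rewrite exchange_big /=; apply: eq_bigr => i _.
  under eq_bigr do rewrite eM !mxE.
  have -> : \sum_j w i j * (y i * y j - y i ^+ 2) =
     \sum_j y i * w i j * y j - y i * (\sum_j w i j) * y i.
    rewrite mulr_sumr mulr_suml -sumrB; apply: eq_bigr => j _; rewrite /y; ring.
  have -> : \sum_j x i 0 * (w i j - (i == j)%:R * \sum_k w i k) * x j 0 =
     \sum_j (y i * w i j * y j - (i == j)%:R * (y i * (\sum_k w i k) * y j)).
    by apply: eq_bigr => j _; rewrite /y; ring.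
  rewrite sumrB; congr (_ - _).
  rewrite (bigD1 i) //= eqxx mul1r [X in _ + X]big1 ?addr0 // => j hj.
  by rewrite eq_sym (negbTE hj) mul0r.
have eQ2 : \sum_i \sum_j w i j * (y i * y j - y i ^+ 2) =
    \sum_i \sum_j w i j * (y i * y j - y j ^+ 2).
  rewrite exchange_big /=; apply: eq_bigr => i _; apply: eq_bigr => j _.
  by rewrite ws; congr (_ * _); ring.
have T0 : 0 <= \sum_i \sum_j w i j * (y i - y j) ^+ 2.
  by apply: sumr_ge0 => i _; apply: sumr_ge0 => j _; rewrite mulr_ge0 // sqr_ge0.
have eT : \sum_i \sum_j w i j * (y i * y j - y i ^+ 2) +
          \sum_i \sum_j w i j * (y i * y j - y j ^+ 2) =
          - \sum_i \sum_j w i j * (y i - y j) ^+ 2.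
  rewrite -big_split -sumrN; apply: eq_bigr => i _.
  rewrite -big_split -sumrN; apply: eq_bigr => j _ /=; ring.
rewrite eQ; move: eT; rewrite -eQ2; lra.
Qed.
Lemma connect_prop (T : finType) (e : rel T) (P : T -> Prop) :
  (forall x y, e x y -> P x -> P y) -> forall x y, connect e x y -> P x -> P y.
Proof.
move=> H x y /connectP [p pth ->]; elim: p x pth => //= a p IH x /andP[exa pth] Px.
exact: IH _ pth (H _ _ exa Px).
Qed.

Section G.
Variables (n c : nat) (adj : rel 'I_n) (rot : 'I_n -> 'I_n -> 'I_n)
  (lab : 'I_n * 'I_n -> option 'I_c).
Hypothesis hG : plane_graph adj rot lab.

Local Notation dt := (dart adj).
Local Notation rv := Defs.rev.

Lemma adj_sym : symmetric adj. Proof. by case: hG. Qed.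
Lemma adj_irr : irreflexive adj. Proof. have [h1 [h2 [h3 [h4 [h5 [h6 [h7 [h8 h9]]]]]]]] := hG; exact: h2. Qed.
Lemma conn u v : connect adj u v. Proof. have [h1 [h2 [h3 [h4 [h5 [h6 [h7 [h8 h9]]]]]]]] := hG; exact: h3. Qed.
Lemma cyc u v : adj u v -> edge_on_cycle adj u v.
Proof. have [h1 [h2 [h3 [h4 [h5 [h6 [h7 [h8 h9]]]]]]]] := hG; exact: h4. Qed.
Lemma rot_adj v u : adj v u -> adj v (rot v u).
Proof. have [h1 [h2 [h3 [h4 [h5 [h6 [h7 [h8 h9]]]]]]]] := hG; exact: h5. Qed.
Lemma rot_conn v u w : adj v u -> adj v w -> fconnect (rot v) u w.
Proof. have [h1 [h2 [h3 [h4 [h5 [h6 [h7 [h8 h9]]]]]]]] := hG; exact: h6. Qed.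
Lemma lab_orb d d' : dt d -> dt d' -> (lab d == lab d') = fconnect (fperm rot) d d'.
Proof. have [h1 [h2 [h3 [h4 [h5 [h6 [h7 [h8 h9]]]]]]]] := hG; exact: h7. Qed.
Lemma lab_surj (o : option 'I_c) : exists2 d, dt d & lab d = o.
Proof. have [h1 [h2 [h3 [h4 [h5 [h6 [h7 [h8 h9]]]]]]]] := hG; exact: h8. Qed.
Lemma euler : (c + n = (medges adj).+1)%N.
Proof. have [h1 [h2 [h3 [h4 [h5 [h6 [h7 [h8 h9]]]]]]]] := hG; exact: h9. Qed.

Lemma dt_rv d : dt d -> dt (rv d).
Proof. by case: d => a b; rewrite /dt /dart /= adj_sym. Qed.

Lemma revK : involutive (@Defs.rev n).
Proof. by case. Qed.

Lemma lab_fperm d : dt d -> lab (fperm rot d) = lab d.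
Proof.
case: d => a b hd; apply/esym/eqP; rewrite lab_orb //; first exact: fconnect1.
by rewrite /dt /dart /=; apply: rot_adj; rewrite adj_sym.
Qed.

Lemma lab_in i j : adj i j -> lab (j, i) = lab (i, rot i j).
Proof.
move=> h; have hd : dt (j, i) by rewrite /dt /dart /= adj_sym.
by rewrite -(lab_fperm (j, i) hd).
Qed.

Lemma iter_rot i j k : adj i j -> adj i (iter k (rot i) j).
Proof. by move=> h; elim: k => //= k IH; exact: rot_adj. Qed.

Lemma rot_onto i : [set rot i j | j in [set j | adj i j]] = [set j | adj i j].
Proof.
apply/eqP; rewrite eqEcard; apply/andP; split.
  by apply/fintype.subsetP => x /imsetP [j]; rewrite !inE => h ->; exact: rot_adj.
apply: subset_leq_card; apply/fintype.subsetP => w; rewrite inE => hw.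
case: (boolP [exists u, adj i u && (u != w)]).
  move=> /existsP [u /andP [hu uw]].
  have hc := rot_conn _ _ _ hu hw.
  have := iter_findex hc; case: (findex _ u w) => [|k] /=.
    by move=> e; rewrite e eqxx in uw.
  move=> <-; apply/imsetP; exists (iter k (rot i) u) => //.
  by rewrite inE; exact: iter_rot.
rewrite negb_exists => /forallP hall.
have h1 : adj i (rot i w) by exact: rot_adj.
have := hall (rot i w); rewrite h1 /= negbK => /eqP e.
by apply/imsetP; exists w; rewrite ?inE // e.
Qed.

Lemma rot_inj i : {in [set j | adj i j] &, injective (rot i)}.
Proof. by apply/imset_injP; rewrite rot_onto. Qed.

Lemma sum_rot (R : nmodType) i (F : 'I_n -> R) :
  \sum_(j | adj i j) F (rot i j) = \sum_(j | adj i j) F j.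
Proof.
have e1 : \sum_(j | adj i j) F j = \sum_(j in [set j | adj i j]) F j.
  by apply: eq_bigl => j; rewrite inE.
have e2 : \sum_(j | adj i j) F (rot i j) = \sum_(j in [set j | adj i j]) F (rot i j).
  by apply: eq_bigl => j; rewrite inE.
by rewrite e1 e2 -(big_imset _ (rot_inj i)) rot_onto.
Qed.

Lemma sum_lab_in (R : nmodType) i (G : option 'I_c -> R) :
  \sum_(j | adj i j) G (lab (j, i)) = \sum_(j | adj i j) G (lab (i, j)).
Proof.
rewrite -(@sum_rot R i (fun j => G (lab (i, j)))) .
by apply: eq_bigr => j h; rewrite (lab_in _ _ h).
Qed.

Lemma dualconn (S : option 'I_c -> Prop) :
  S None -> (forall d, dt d -> S (lab d) -> S (lab (rv d))) -> forall o, S o.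
Proof.
move=> S0 Scl.
have hrot i j : adj i j -> S (lab (i, j)) -> forall w, adj i w -> S (lab (i, w)).
  move=> hij hS w hw.
  have [k ->] : exists k, w = iter k (rot i) j.
    by exists (findex (rot i) j w); rewrite iter_findex //; exact: rot_conn.
  elim: k => //= k IH.
  have hk := iter_rot _ _ k hij.
  rewrite -(lab_in _ _ hk); exact: (Scl (i, iter k (rot i) j) hk IH).
pose P i := forall w, adj i w -> S (lab (i, w)).
have [d0 hd0 ld0] := lab_surj None.
have P0 : P d0.1.
  apply: (hrot _ d0.2) => //; by case: d0 hd0 ld0 => a b /= h ->.
have Pall v : P v.
  apply: (@connect_prop _ adj P _ _ _ (conn d0.1 v) P0).
  move=> x y hxy Px; apply: (hrot y x); first by rewrite adj_sym.
  exact: (Scl (x, y) hxy (Px _ hxy)).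
move=> o; have [[a b] hd <-] := lab_surj o; exact: Pall.
Qed.


Lemma dt_neq d : dt d -> d.1 != d.2.
Proof. by case: d => a b /=; apply: contraTneq => ->; rewrite /dt /dart /= adj_irr. Qed.

Definition Eset := [set d : 'I_n * 'I_n | dt d && (val d.1 < val d.2)%N].
Definition mE := #|Eset|.
Definition ev (j : 'I_mE) : 'I_n * 'I_n := enum_val j.

Lemma ev_E j : ev j \in Eset. Proof. exact: enum_valP. Qed.
Lemma dt_ev j : dt (ev j). Proof. by have := ev_E j; rewrite inE => /andP[]. Qed.
Lemma Eev e : e \in Eset -> exists j, ev j = e.
Proof. by move=> He; exists (enum_rank_in He e); rewrite /ev enum_rankK_in. Qed.

Lemma dt_E d : dt d -> d \in Eset \/ rv d \in Eset.
Proof.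
move=> hd; have := dt_neq _ hd; rewrite !inE hd dt_rv //=.
case: d hd => [a b] /= _ ab.
have : val a != val b by apply: contra ab => /eqP h; apply/eqP; apply: val_inj.
by rewrite neq_ltn => /orP [] ->; [left | right].
Qed.

Lemma rvE : [set rv d | d in Eset] = [set d | rv d \in Eset].
Proof. by apply: can2_imset_pre; exact: revK. Qed.

Lemma darts_split : [set d | dt d] = Eset :|: [set rv d | d in Eset].
Proof.
rewrite rvE; apply/setP => d; rewrite !inE.
apply/idP/idP.
  by move=> hd; case: (dt_E _ hd); rewrite inE => -> //; rewrite orbT.
case/orP => /andP [] // h _.
by have := dt_rv _ h; rewrite revK.
Qed.

Lemma disjE : [disjoint Eset & [set rv d | d in Eset]].
Proof.
rewrite rvE -setI_eq0; apply/eqP/setP => d; rewrite !inE.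
case: d => a b /=; apply/negbTE; rewrite negb_and; case: (ltnP (val a) (val b)) => h.
  by rewrite ltnNge (ltnW h) !andbF orbT.
by rewrite andbF.
Qed.

Lemma card_darts : #|[set d | dt d]| = (mE * 2)%N.
Proof.
rewrite darts_split cardsU.
have -> : Eset :&: [set rv d | d in Eset] = finset.set0.
  by apply/eqP; rewrite setI_eq0 disjE.
rewrite cards0 subn0 card_imset; last exact: (can_inj revK).
by rewrite muln2 addnn.
Qed.

Lemma medgesE : medges adj = mE.
Proof. by rewrite /medges card_darts mulnK. Qed.

Lemma sumE (R : nmodType) (F : 'I_n * 'I_n -> R) :
  \sum_(e in Eset) (F e + F (rv e)) = \sum_(d | dt d) F d.
Proof.
have -> : \sum_(d | dt d) F d = \sum_(d in [set d | dt d]) F d.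
  by apply: eq_bigl => d; rewrite inE.
rewrite darts_split.
have -> : \sum_(d in Eset :|: [set rv d | d in Eset]) F d =
  \sum_(d in [predU Eset & [set rv d | d in Eset]]) F d.
  by apply: eq_bigl => d; rewrite !inE.
rewrite bigU ?disjE // big_split /=; congr (_ + _).
by rewrite big_imset //; move=> x y _ _; exact: (can_inj revK).
Qed.

Lemma pair_fst (R : nmodType) i (F : 'I_n * 'I_n -> R) :
  \sum_(d | dt d && (d.1 == i)) F d = \sum_(j | adj i j) F (i, j).
Proof.
rewrite big_mkcond.
have -> : \sum_d (if dt d && (d.1 == i) then F d else 0) =
  \sum_a \sum_b (if adj a b && (a == i) then F (a, b) else 0).
  by rewrite pair_big /=; apply: eq_bigr => [[a b]] _.
rewrite (bigD1 i) //=.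
rewrite [X in _ + X]big1; last by move=> a /negbTE ai; apply: big1 => b _; rewrite ai andbF.
by rewrite addr0 [RHS]big_mkcond; apply: eq_bigr => j _; rewrite eqxx andbT.
Qed.

Lemma pair_snd (R : nmodType) i (F : 'I_n * 'I_n -> R) :
  \sum_(d | dt d && (d.2 == i)) F d = \sum_(j | adj i j) F (j, i).
Proof.
rewrite big_mkcond.
have -> : \sum_d (if dt d && (d.2 == i) then F d else 0) =
  \sum_a \sum_b (if adj a b && (b == i) then F (a, b) else 0).
  by rewrite pair_big /=; apply: eq_bigr => [[a b]] _.
rewrite exchange_big (bigD1 i) //=.
rewrite [X in _ + X]big1; last by move=> b /negbTE bi; apply: big1 => a _; rewrite bi andbF.
by rewrite addr0 [RHS]big_mkcond; apply: eq_bigr => j _; rewrite eqxx andbT adj_sym.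
Qed.

Variable R : realType.

Definition Cm : 'M[R]_(n, mE) :=
  \matrix_(i, j) ((i == (ev j).1)%:R - (i == (ev j).2)%:R).
Definition Pm : 'M[R]_(c, mE) :=
  \matrix_(k, j) ((lab (ev j) == Some k)%:R - (lab (rv (ev j)) == Some k)%:R).
Definition rowE (w : 'I_n * 'I_n -> R) : 'rV[R]_mE := \row_j w (ev j).

Definition antisym (w : 'I_n * 'I_n -> R) := forall d, dt d -> w (rv d) = - w d.

Lemma sum_ev (F : 'I_n * 'I_n -> R) : \sum_(j < mE) F (ev j) = \sum_(e in Eset) F e.
Proof. by rewrite [RHS]big_enum_val. Qed.

Lemma faceE w (hw : antisym w) k :
  (rowE w *m Pm^T) 0 k = \sum_(d | dt d && (lab d == Some k)) w d.
Proof.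
rewrite !mxE.
pose F d := (lab d == Some k)%:R * w d.
rewrite (eq_bigr (fun j => F (ev j) + F (rv (ev j)))); last first.
  move=> j _; rewrite !mxE /F (hw _ (dt_ev j)).
  by rewrite mulrBr mulrN mulrC [w _ * _]mulrC.
rewrite (sum_ev (fun e => F e + F (rv e))) sumE big_mkcondr /=.
by apply: eq_bigr => d _; rewrite /F; case: eqP; rewrite ?mul1r ?mul0r.
Qed.

Lemma divE w (hw : antisym w) i :
  (rowE w *m Cm^T) 0 i = \sum_(d | dt d && (d.1 == i)) w d.
Proof.
rewrite !mxE.
pose F d := (i == d.1)%:R * w d.
rewrite (eq_bigr (fun j => F (ev j) + F (rv (ev j)))); last first.
  move=> j _; rewrite !mxE /F (hw _ (dt_ev j)).
  by rewrite mulrBr mulrN mulrC [w _ * _]mulrC.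
rewrite (sum_ev (fun e => F e + F (rv e))) sumE big_mkcondr /=.
by apply: eq_bigr => d _; rewrite /F eq_sym; case: eqP; rewrite ?mul1r ?mul0r.
Qed.

Lemma sum_ind (F : 'I_n -> R) a : \sum_i F i * (i == a)%:R = F a.
Proof.
rewrite (bigD1 a) //= eqxx mulr1 big1 ?addr0 // => i /negbTE ->; by rewrite mulr0.
Qed.

Lemma cobE (th : 'rV[R]_n) j : (th *m Cm) 0 j = th 0 (ev j).1 - th 0 (ev j).2.
Proof.
rewrite mxE; under eq_bigr do rewrite mxE mulrBr.
by rewrite sumrB !sum_ind.
Qed.

Lemma CP0 : Cm *m Pm^T = 0.
Proof.
apply/matrixP => i k; rewrite [RHS]mxE.
pose w (d : 'I_n * 'I_n) : R := (i == d.1)%:R - (i == d.2)%:R.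
have hw : antisym w by move=> d _; rewrite /w /= opprB.
have -> : (Cm *m Pm^T) i k = (rowE w *m Pm^T) 0 k.
  by rewrite !mxE; apply: eq_bigr => j _; rewrite !mxE.
rewrite faceE // /w sumrB; apply/eqP; rewrite subr_eq0; apply/eqP.
have e1 : \sum_(d | dt d && (lab d == Some k)) (i == d.1)%:R =
          \sum_(d | dt d && (d.1 == i)) ((lab d == Some k)%:R : R).
  rewrite big_mkcond [RHS]big_mkcond; apply: eq_bigr => d _.
  by rewrite [i == _]eq_sym; case: (dt d); case: (d.1 == i); case: (lab d == Some k).
have e2 : \sum_(d | dt d && (lab d == Some k)) (i == d.2)%:R =
          \sum_(d | dt d && (d.2 == i)) ((lab d == Some k)%:R : R).
  rewrite big_mkcond [RHS]big_mkcond; apply: eq_bigr => d _.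
  by rewrite [i == _]eq_sym; case: (dt d); case: (d.2 == i); case: (lab d == Some k).
rewrite e1 e2 pair_fst pair_snd.
symmetry; exact: (@sum_lab_in _ i (fun o => ((o == Some k)%:R : R))).
Qed.

Lemma n_pos : (0 < n)%N.
Proof. by have [[[m h] b] _ _] := lab_surj None; lia. Qed.

Definition i0 : 'I_n := Ordinal n_pos.

Lemma ext_C (w : 'I_n * 'I_n -> R) (th : 'rV[R]_n) : antisym w ->
  rowE w = th *m Cm -> forall d, dt d -> w d = th 0 d.1 - th 0 d.2.
Proof.
move=> hw e d hd.
have key x : x \in Eset -> w x = th 0 x.1 - th 0 x.2.
  move=> /Eev [j <-]; have := congr1 (fun M : 'rV[R]_mE => M 0 j) e.
  by rewrite cobE mxE.
case: (dt_E _ hd) => /key // h.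
by rewrite -[w d]opprK -hw // h /= opprB.
Qed.

Lemma kerC (v : 'rV[R]_n) : v *m Cm = 0 -> forall i, v 0 i = v 0 i0.
Proof.
move=> hv.
have hd x y : adj x y -> v 0 x = v 0 y.
  move=> hxy.
  have := @ext_C (fun d => 0) v (fun d _ => esym (oppr0 _)).
  move=> /(_ _ (x, y) hxy) /=.
  have -> : rowE (fun _ => 0) = v *m Cm by rewrite hv; apply/rowP => j; rewrite !mxE.
  by move=> /(_ erefl) /eqP; rewrite eq_sym subr_eq0 => /eqP.
move=> i; apply: (@connect_prop _ adj (fun x => v 0 x = v 0 i0) _ i0 i (conn i0 i)) => //.
by move=> x y hxy <-; rewrite (hd _ _ hxy).
Qed.

Lemma rankC : (n - 1 <= \rank Cm)%N.
Proof.
have sub : (kermx Cm <= (const_mx 1 : 'rV[R]_n))%MS.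
  apply/row_subP => r; set v := row r (kermx Cm).
  have hv : v *m Cm = 0 by apply/eqP; rewrite -sub_kermx row_sub.
  have -> : v = v 0 i0 *: (const_mx 1 : 'rV[R]_n).
    by apply/rowP => j; rewrite (kerC _ hv j) !mxE mulr1.
  by rewrite scalemx_sub // submx_refl.
have := mxrankS sub; rewrite mxrank_ker => h.
have h2 := rank_leq_row (const_mx 1 : 'rV[R]_n).
have h3 := rank_leq_col Cm.
lia.
Qed.

Definition phi (v : 'I_c -> R) (o : option 'I_c) : R :=
  if o is Some k then v k else 0.

Lemma sum_opt (f : 'I_c -> R) (o : option 'I_c) :
  \sum_k f k * (o == Some k)%:R = phi f o.
Proof.
case: o => [k0|] /=; last by rewrite big1 // => k _; rewrite mulr0.
rewrite (bigD1 k0) //= eqxx mulr1 [X in _ + X]big1 ?addr0 // => k hk.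
have -> : (Some k0 == Some k) = false by apply/negbTE; rewrite eq_sym.
by rewrite mulr0.
Qed.

Lemma ext_P (w : 'I_n * 'I_n -> R) (v : 'rV[R]_c) : antisym w ->
  rowE w = v *m Pm -> forall d, dt d ->
  w d = phi (fun k => v 0 k) (lab d) - phi (fun k => v 0 k) (lab (rv d)).
Proof.
move=> hw e d hd.
have key x : x \in Eset ->
    w x = phi (fun k => v 0 k) (lab x) - phi (fun k => v 0 k) (lab (rv x)).
  move=> /Eev [j <-]; have := congr1 (fun M : 'rV[R]_mE => M 0 j) e.
  rewrite !mxE => ->; under eq_bigr do rewrite !mxE mulrBr.
  by rewrite sumrB !sum_opt.
case: (dt_E _ hd) => /key // h.
by rewrite -[w d]opprK -hw // h revK opprB.
Qed.

Lemma Pinj (v : 'rV[R]_c) : v *m Pm = 0 -> v = 0.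
Proof.
move=> hv.
have e : rowE (fun _ => 0) = v *m Pm by rewrite hv; apply/rowP => j; rewrite !mxE.
have h := @ext_P (fun _ => 0) v (fun d _ => esym (oppr0 _)) e.
have := @dualconn (fun o => phi (fun k => v 0 k) o = 0) erefl.
have step d : dt d -> phi (fun k => v 0 k) (lab d) = 0 ->
    phi (fun k => v 0 k) (lab (rv d)) = 0.
  move=> hd h0; have := h d hd; rewrite h0 sub0r => /eqP.
  by rewrite eq_sym oppr_eq0 => /eqP.
move=> /(_ step) hall; apply/rowP => k; rewrite mxE; exact: (hall (Some k)).
Qed.

Lemma rankP : (c <= \rank Pm)%N.
Proof.
have k0 : kermx Pm = 0.
  apply/row_matrixP => r; rewrite row0; apply: Pinj.
  by apply/eqP; rewrite -sub_kermx row_sub.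
have := mxrank_ker Pm; rewrite k0 mxrank0 => /esym /eqP.
by rewrite subn_eq0.
Qed.

Lemma LA1 (w : 'rV[R]_mE) : w *m Pm^T = 0 -> exists th : 'rV[R]_n, w = th *m Cm.
Proof.
move=> hw.
have sub1 : (Cm <= kermx Pm^T)%MS by rewrite sub_kermx CP0.
have r1 : \rank (kermx Pm^T) = (mE - \rank Pm)%N by rewrite mxrank_ker mxrank_tr.
have eu := euler; rewrite medgesE in eu.
have rc := rankC; have rp := rankP.
have hle : (\rank (kermx Pm^T) <= \rank Cm)%N by rewrite r1; lia.
have sub2 : (kermx Pm^T <= Cm)%MS.
  by rewrite -(mxrank_leqif_sup sub1).2 eqn_leq (mxrankS sub1) hle.
apply/submxP; apply: submx_trans sub2; by rewrite sub_kermx hw.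
Qed.

Lemma LA2 (w : 'rV[R]_mE) : w *m Cm^T = 0 -> exists v : 'rV[R]_c, w = v *m Pm.
Proof.
move=> hw.
have sub1 : (Pm <= kermx Cm^T)%MS.
  by rewrite sub_kermx -[Pm]trmxK -trmx_mul CP0 trmx0.
have r1 : \rank (kermx Cm^T) = (mE - \rank Cm)%N by rewrite mxrank_ker mxrank_tr.
have eu := euler; rewrite medgesE in eu.
have rc := rankC; have rp := rankP.
have hle : (\rank (kermx Cm^T) <= \rank Pm)%N by rewrite r1; lia.
have sub2 : (kermx Cm^T <= Pm)%MS.
  by rewrite -(mxrank_leqif_sup sub1).2 eqn_leq (mxrankS sub1) hle.
apply/submxP; apply: submx_trans sub2; by rewrite sub_kermx hw.
Qed.

Definition xo (eps : 'I_c -> R) d := phi eps (lab d) - phi eps (lab (rv d)).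

Lemma xo_anti eps : antisym (xo eps).
Proof. by move=> d _; rewrite /xo revK opprB. Qed.

Lemma delta_eq eps k d : lab d = Some k -> delta lab eps k d = asin (xo eps d).
Proof. by move=> h; rewrite /delta /xo h /=; case: (lab (rv d)) => [l|] //=; rewrite subr0. Qed.

Lemma xbound eps : in_DG adj lab eps -> forall d, dt d -> `|xo eps d| <= 1.
Proof.
move=> [ho hb] d hd; rewrite /xo.
case hl: (lab d) => [k|]; case hr: (lab (rv d)) => [l|] /=.
- case: (eqVneq k l) => [->|kl]; first by rewrite subrr normr0.
  apply: hb kl _; rewrite card_gt0; apply/set0Pn; exists d.
  by rewrite inE hd hl hr !eqxx.
- rewrite subr0; apply: ho; rewrite card_gt0; apply/set0Pn; exists d.
  by rewrite inE hd hl hr !eqxx.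
- rewrite sub0r normrN; apply: ho; rewrite card_gt0; apply/set0Pn; exists (rv d).
  by rewrite inE dt_rv // hr revK hl !eqxx.
- by rewrite subrr normr0.
Qed.

Lemma count_sum (P Q : pred ('I_n * 'I_n)) (a : R) :
  \sum_(d | P d) (Q d)%:R * a = #|[set d | P d && Q d]|%:R * a.
Proof.
rewrite -big_distrl /=; congr (_ * _).
rewrite big_mkcond (eq_bigr (fun d => if P d && Q d then 1 else 0)); last first.
  by move=> d _; case: (P d); case: (Q d).
rewrite -big_mkcond /=.
have -> : \sum_(d | P d && Q d) (1 : R) = \sum_(d in [set d | P d && Q d]) 1.
  by apply: eq_bigl => d; rewrite inE.
by rewrite sumr_const.
Qed.

Lemma A_sum eps k :
  \sum_(d | dt d && (lab d == Some k)) asin (xo eps d) = A_k adj lab eps k.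
Proof.
have pt d : dt d && (lab d == Some k) -> asin (xo eps d) =
    (lab (rv d) == None)%:R * asin (eps k) +
    \sum_(l < c | l != k) (lab (rv d) == Some l)%:R * asin (eps k - eps l).
  move=> /andP [_ /eqP hl]; rewrite /xo hl /=.
  case hr: (lab (rv d)) => [l|] /=.
  - rewrite mul0r add0r.
    case: (eqVneq l k) => [->|lk].
      rewrite subrr asin_0 big1 // => l' hl'.
      case: eqP => [[e]|_]; last by rewrite mul0r.
      by rewrite e eqxx in hl'.
    rewrite (bigD1 l) //= eqxx mul1r [X in _ = _ + X]big1 ?addr0 // => l' /andP [_ hl'].
    case: eqP => [[e]|_]; last by rewrite mul0r.
    by rewrite e eqxx in hl'.
  - rewrite mul1r subr0 big1 ?addr0 // => l' _.
    by rewrite mul0r.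
rewrite (eq_bigr _ pt) big_split /= count_sum /A_k; congr (_ + _).
rewrite exchange_big /=; apply: eq_bigr => l _.
by rewrite count_sum.
Qed.

Lemma sum_ind2 (a : 'I_n * 'I_n) k : dt a ->
  \sum_(x | dt x && (lab x == Some k)) ((x == a)%:R : R) = (lab a == Some k)%:R.
Proof.
move=> ha; rewrite big_mkcond (bigD1 a) //= ha eqxx /=.
rewrite [X in _ + X]big1 ?addr0; first by case: (lab a == Some k).
by move=> x /negbTE ->; case: (_ && _).
Qed.

Lemma eq_rv (x d : 'I_n * 'I_n) : (rv x == rv d) = (x == d).
Proof. exact: (inj_eq (can_inj revK)). Qed.
Lemma eq_rv2 (x d : 'I_n * 'I_n) : (rv x == d) = (x == rv d).
Proof. by rewrite -{1}(revK d) eq_rv. Qed.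

Lemma rv_neq d : dt d -> (d == rv d) = false.
Proof.
move=> hd; apply/negbTE; have := dt_neq _ hd; apply: contra.
by case: d {hd} => a b /eqP [->].
Qed.

Lemma good_all : forall o : option 'I_c, exists z : 'I_n * 'I_n -> int,
  (forall d, dt d -> z (rv d) = - z d) /\
  forall k, \sum_(d | dt d && (lab d == Some k)) ((z d)%:~R : R) = ((o == Some k)%:R : R).
Proof.
apply: dualconn.
  exists (fun _ => 0); split => // k; rewrite big1 // => d _; exact: mulr0z.
move=> d hd [z [hz hs]].
exists (fun x => z x + ((x == rv d)%:Z - (x == d)%:Z)); split.
  move=> x hx; rewrite hz // eq_rv eq_rv2; ring.
move=> k.
under eq_bigr do rewrite intrD intrB -!pmulrn.
rewrite big_split sumrB /= hs !sum_ind2 ?dt_rv //.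
by rewrite addrC subrK.
Qed.

Lemma good_q (q : 'I_c -> int) : exists z : 'I_n * 'I_n -> int,
  (forall d, dt d -> z (rv d) = - z d) /\
  forall k, \sum_(d | dt d && (lab d == Some k)) ((z d)%:~R : R) = (q k)%:~R.
Proof.
have [zs hzs] := boolp.choice (fun k : 'I_c => good_all (Some k)).
exists (fun x => \sum_k q k * zs k x); split.
  move=> d hd; rewrite -sumrN; apply: eq_bigr => k _.
  by rewrite (hzs k).1 // mulrN.
move=> k'.
under eq_bigr do rewrite rmorph_sum /=.
rewrite exchange_big /=.
under eq_bigr do (under eq_bigr do rewrite intrM; rewrite -mulr_sumr (hzs _).2).
rewrite (bigD1 k') //= eqxx mulr1 [X in _ + X]big1 ?addr0 // => k hk.
have -> : (Some k == Some k') = false by apply/negbTE.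
by rewrite mulr0.
Qed.

Lemma key_exist (eps : 'I_c -> R) (q : 'I_c -> int) : Qset adj lab q eps ->
  exists theta : 'I_n -> R, forall d, dt d ->
    Delta theta d.1 d.2 = asin (xo eps d).
Proof.
move=> [hD hA].
have [z [hz hs]] := good_q q.
pose om d := asin (xo eps d) - 2 * pi * (z d)%:~R.
have hom : antisym om.
  move=> d hd; rewrite /om xo_anti // asinN ?xbound // hz // rmorphN /=.
  ring.
have h0 : rowE om *m Pm^T = 0.
  apply/rowP => k; rewrite faceE // [RHS]mxE /om sumrB -mulr_sumr hs.
  by rewrite A_sum hA subrr.
have [th e] := LA1 _ h0.
exists (fun i => th 0 i) => d hd.
rewrite /Delta -(ext_C _ _ hom e _ hd) /om.
have -> : asin (xo eps d) - 2 * pi * (z d)%:~R =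
          asin (xo eps d) + 2 * pi * (- z d)%:~R by rewrite rmorphN /= mulrN.
by rewrite wrap_shift wrap_id // pihalf_in // asin_rng // xbound.
Qed.

Lemma exist_theta (eps : 'I_c -> R) (q : 'I_c -> int) (K : R) : 0 < K ->
  Qset adj lab q eps ->
  exists theta : 'I_n -> R,
    [/\ realizes adj lab eps theta, stable_fp adj K theta,
        small_angles adj theta & has_winding adj lab theta q].
Proof.
move=> hK hQ; have [th hth] := key_exist _ _ hQ.
have hD := hQ.1.
exists th; split.
- by move=> d k hd hl; rewrite hth // delta_eq.
- split.
    move=> i.
    have -> : \sum_(j < n | adj i j) sin (th i - th j) =
              \sum_(j < n | adj i j) xo eps (i, j).
      apply: eq_bigr => j hj.
      by rewrite -sin_wrap -/(Delta th i j) (hth (i, j) hj) asin_K // xbound.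
    rewrite /xo sumrB; apply/eqP; rewrite subr_eq0; apply/eqP.
    symmetry; exact: (@sum_lab_in _ i (phi eps)).
  apply: negsemi; [exact: adj_sym | exact: adj_irr | exact: ltW |].
  move=> i j hij; rewrite -cos_wrap -/(Delta th i j) (hth (i, j) hij).
  by apply: cos_ge0_pihalf; rewrite asin_rng // xbound.
- move=> i j hij; rewrite (hth (i, j) hij) ler_norml.
  by rewrite asin_rng // xbound.
- move=> k; rewrite -hQ.2 -(A_sum eps k).
  by apply: eq_bigr => d /andP [hd _]; rewrite hth.
Qed.

Lemma nobridge d : dt d -> lab d != lab (rv d).
Proof.
move=> hd; apply/negP => /eqP e.
pose w (x : 'I_n * 'I_n) : R := (x == d)%:R - (x == rv d)%:R.
have hw : antisym w by move=> x _; rewrite /w eq_rv eq_rv2 opprB.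
have h0 : rowE w *m Pm^T = 0.
  apply/rowP => k; rewrite faceE // [RHS]mxE /w sumrB !sum_ind2 ?dt_rv //.
  by rewrite e subrr.
have [th eth] := LA1 _ h0.
have hx := ext_C _ _ hw eth.
have h1 : th 0 d.1 - th 0 d.2 = 1.
  by rewrite -hx // /w eqxx rv_neq // subr0.
have := cyc _ _ hd; rewrite /edge_on_cycle => hc.
have : th 0 d.1 = th 0 d.2.
  apply: (@connect_prop _ _ (fun y => th 0 y = th 0 d.2) _ d.2 d.1 hc) => //.
  move=> x y /andP [hxy hs] <-; apply/eqP; rewrite eq_sym -subr_eq0.
  have := hx (x, y) hxy; rewrite /w /= => <-.
  case: (eqVneq (x, y) d) => [exd|nd].
    by move: hs; rewrite -exd eqxx.
  case: (eqVneq (x, y) (rv d)) => [exd|nd2]; last by rewrite subrr.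
  have ex : x = d.2 by rewrite -[x]/((x, y).1) exd.
  have ey : y = d.1 by rewrite -[y]/((x, y).2) exd.
  by move: hs; rewrite ex ey finset.setUC eqxx.
by move=> e2; move: h1; rewrite e2 subrr => /eqP; rewrite eq_sym oner_eq0.
Qed.

Lemma uniq_theta (eps : 'I_c -> R) (q : 'I_c -> int) (th th' : 'I_n -> R) :
  Qset adj lab q eps -> realizes adj lab eps th -> realizes adj lab eps th' ->
  config_equiv th th'.
Proof.
move=> hQ h1 h2.
have hlab d k : dt d -> lab d = Some k ->
    exists z : int, (th d.1 - th d.2) - (th' d.1 - th' d.2) = 2 * pi * z%:~R.
  move=> hd hl; apply: wrap_diff.
  have e1 := h1 d k hd hl; have e2 := h2 d k hd hl.
  by rewrite /Delta in e1 e2; rewrite e1 e2.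
have hD d : dt d ->
    exists z : int, (th d.1 - th d.2) - (th' d.1 - th' d.2) = 2 * pi * z%:~R.
  move=> hd; case hl: (lab d) => [k|]; first exact: hlab hd hl.
  case hr: (lab (rv d)) => [l|]; last by have := nobridge _ hd; rewrite hl hr.
  have [z ez] := hlab _ _ (dt_rv _ hd) hr.
  exists (- z); rewrite rmorphN /= mulrN -ez /=; ring.
pose P v := exists z : int, (th v - th' v) - (th i0 - th' i0) = 2 * pi * z%:~R.
have Pall v : P v.
  apply: (@connect_prop _ adj P _ i0 v (conn i0 v)).
    move=> x y hxy [z ez]; have [z1 ez1] := hD (x, y) hxy.
    exists (z - z1); rewrite rmorphB /= mulrBr -ez -ez1 /=; ring.
  by exists 0; rewrite subrr mulr0z mulr0.
have [zf hzf] := boolp.choice Pall.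
exists (th' i0 - th i0), (fun i => - zf i) => i.
rewrite rmorphN /= mulrN -hzf; ring.
Qed.

Lemma inj_eps (eps eps' : 'I_c -> R) (q : 'I_c -> int) (th th' : 'I_n -> R) :
  Qset adj lab q eps -> Qset adj lab q eps' ->
  realizes adj lab eps th -> realizes adj lab eps' th' ->
  config_equiv th th' -> eps = eps'.
Proof.
move=> hQ hQ' h1 h2 [C [z hz]].
have hDe a b : Delta th a b = Delta th' a b.
  rewrite /Delta.
  have -> : th' a - th' b = th a - th b + 2 * pi * (z a - z b)%:~R.
    by rewrite !hz rmorphB /=; ring.
  by rewrite wrap_shift.
have hx d k : dt d -> lab d = Some k -> xo eps d = xo eps' d.
  move=> hd hl; apply: asin_inj; [exact: (xbound _ hQ.1 _ hd) | exact: (xbound _ hQ'.1 _ hd) |].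
  by rewrite -(delta_eq eps k d hl) -(delta_eq eps' k d hl) -(h1 d k hd hl) -(h2 d k hd hl) hDe.
have hxa d : dt d -> xo eps d = xo eps' d.
  move=> hd; case hl: (lab d) => [k|]; first exact: hx hl.
  case hr: (lab (rv d)) => [l|]; last by rewrite /xo hl hr.
  have := hx _ _ (dt_rv _ hd) hr.
  by rewrite !xo_anti // => /eqP; rewrite eqr_opp => /eqP.
pose psi o := phi eps o - phi eps' o.
have step d : dt d -> psi (lab d) = 0 -> psi (lab (rv d)) = 0.
  move=> hd; have := hxa d hd; rewrite /xo /psi => e h0; lra.
have hall := @dualconn (fun o => psi o = 0) (subrr 0) step.
apply: boolp.funext => k; have := hall (Some k); rewrite /psi /= => h; lra.
Qed.

Lemma surj_eps (q : 'I_c -> int) (K : R) (th : 'I_n -> R) :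
  stable_fp adj K th -> small_angles adj th -> has_winding adj lab th q ->
  exists2 eps : 'I_c -> R, Qset adj lab q eps & realizes adj lab eps th.
Proof.
move=> [hfp _] hsa hw.
pose s (d : 'I_n * 'I_n) := sin (th d.1 - th d.2).
have hs : antisym s by move=> d _; rewrite /s /= -sinN opprB.
have h0 : rowE s *m Cm^T = 0.
  apply/rowP => i; rewrite divE // [RHS]mxE pair_fst; exact: hfp.
have [v ev] := LA2 _ h0.
pose eps k := v 0 k.
have hx : forall d, dt d -> s d = xo eps d := ext_P _ _ hs ev.
have key d : dt d -> Delta th d.1 d.2 = asin (xo eps d).
  move=> hd; rewrite -hx // /s -sin_wrap -/(Delta th _ _) sin_K //.
  by rewrite -ler_norml; exact: hsa.
have hsx d : dt d -> `|xo eps d| <= 1 by move=> hd; rewrite -hx // sin_max.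
have hDG : in_DG adj lab eps.
  split.
    move=> k; rewrite card_gt0 => /set0Pn [d]; rewrite inE => /andP [/andP [hd hl] hr].
    by have := hsx d hd; rewrite /xo (eqP hl) (eqP hr) /= subr0.
  move=> k l _; rewrite card_gt0 => /set0Pn [d]; rewrite inE => /andP [/andP [hd hl] hr].
  by have := hsx d hd; rewrite /xo (eqP hl) (eqP hr).
exists eps.
  split => // k; rewrite -A_sum -hw; apply: eq_bigr => d /andP [hd _].
  by rewrite key.
by move=> d k hd hl; rewrite key // delta_eq.
Qed.
End G.

Theorem proposition1 (R : realType) (n c : nat) (adj : rel 'I_n)
    (rot : 'I_n -> 'I_n -> 'I_n) (lab : 'I_n * 'I_n -> option 'I_c)
    (hG : plane_graph adj rot lab) (K : R) (hK : 0 < K) (q : 'I_c -> int) :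
  (* for every eps in Q(q): existence and uniqueness of the configuration,
     which is a stable fixed point with small angles and winding vector q *)
  (forall eps : 'I_c -> R, Qset adj lab q eps ->
     (exists theta : 'I_n -> R,
        [/\ realizes adj lab eps theta, stable_fp adj K theta,
            small_angles adj theta & has_winding adj lab theta q]) /\
     (forall theta theta' : 'I_n -> R,
        realizes adj lab eps theta -> realizes adj lab eps theta' ->
        config_equiv theta theta')) /\
  (* the induced map on equivalence classes is injective *)
  (forall (eps eps' : 'I_c -> R) (theta theta' : 'I_n -> R),
     Qset adj lab q eps -> Qset adj lab q eps' ->
     realizes adj lab eps theta -> realizes adj lab eps' theta' ->
     config_equiv theta theta' -> eps = eps') /\
  (* ... and surjective *)
  (forall theta : 'I_n -> R,
     stable_fp adj K theta -> small_angles adj theta ->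
     has_winding adj lab theta q ->
     exists2 eps : 'I_c -> R, Qset adj lab q eps & realizes adj lab eps theta).
Proof.
split; [|split].
- move=> eps hQ; split.
    exact: (@exist_theta _ _ _ _ _ hG _ _ _ _ hK hQ).
  move=> th th' h1 h2; exact: (@uniq_theta _ _ _ _ _ hG _ _ _ _ _ hQ h1 h2).
- move=> eps eps' th th' hQ hQ' h1 h2 he; exact: (@inj_eps _ _ _ _ _ hG _ _ _ _ _ _ hQ hQ' h1 h2 he).
- move=> th hs ha hw; exact: (@surj_eps _ _ _ _ _ hG _ _ _ _ hs ha hw).
Qed.
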